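(* Let $\omega\in(0,1)$ and $I=\lceil\log\omega/\log\gamma\rceil$. Let $\pi_0$ be an arbitrary deterministic stationary memoryless policy and, for $i=1,\dots,I$, let $\hat q_i:\mathcal{S}\times\mathcal{A}\to\mathbb{R}$ be any function with $|\hat q_i(s,a)-q^{\pi_{i-1}}(s,a)|\le\omega$ for all $(s,a)\in\mathcal{S}\times\mathcal{A}$, and set $\pi_i=\pi_{\hat q_i,\pi_{i-1},\emptyset}$ (the CAPI update with $\mathcal{S}_{\text{fix}}=\emptyset$). Then $\pi_I$ is $5\omega/(1-\gamma)$-optimal on $\mathcal{S}$, i.e. $v^\star(s)-v^{\pi_I}(s)\le 5\omega/(1-\gamma)$ for all $s\in\mathcal{S}$.
   Context: An MDP has measurable state space $\mathcal{S}$, finite ordered action set $\mathcal{A}=(\mathcal{A}_1,\dots,\mathcal{A}_{|\mathcal{A}|})$, transition kernel $P$ and rewards in $[0,1]$; discount $\gamma\in(0,1)$. $v^\pi(s)=\mathbb{E}_{\pi,s}[\sum_{t\ge0}\gamma^tR_t]$, $q^\pi(s,a)=\mathbb{E}_{\pi,s,a}[\sum_{t\ge0}\gamma^tR_t]$, $v^\star=\sup_\pi v^\pi$. A policy $\pi$ is $\Delta$-optimal on $\mathcal{S}'$ if $v^\star(s)-v^\pi(s)\le\Delta$ for all $s\in\mathcal{S}'$. CAPI update: given $\hat q$, a deterministic policy $\pi$, $\omega>0$ and $\mathcal{S}_{\text{fix}}\subseteq\mathcal{S}$, $\pi_{\hat q,\pi,\mathcal{S}_{\text{fix}}}(s)=\arg\max_a\hat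 q(s,a)$ (ties broken by smallest index) if $s\notin\mathcal{S}_{\text{fix}}$ and $\hat q(s,\pi(s))+\omega<\max_a\hat q(s,a)-\omega$, and $=\pi(s)$ otherwise. *)

(* Defs.v *)
From HB Require Import structures.
From mathcomp Require Import all_boot all_order all_algebra.
From mathcomp Require Import all_classical all_reals all_analysis.
Set Implicit Arguments.
Unset Strict Implicit.
Unset Printing Implicit Defensive.
Import Order.TTheory GRing.Theory Num.Theory.
Local Open Scope classical_set_scope.
Local Open Scope ring_scope.

(* An MDP with measurable state space S, finite ordered action set
   A = 'I_n.+1 (actions ordered by their index), transition kernel
   P a : R.-pker S ~> S (P a s = law of the next state from (s,a)),
   (expected) reward function r s a in [0,1], discount gamma. *)
Section MDP.
Context {R : realType} {d : measure_display} {S : measurableType d} {n : nat}.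
Local Notation A := 'I_n.+1.
Variables (P : A -> R.-pker S ~> S) (r : S -> A -> R) (gamma : R).

(* General (history-dependent, randomized) policies: given the past
   history [(s_0,a_0); ...; (s_{t-1},a_{t-1})] and the current state s_t,
   a probability vector on actions. *)
Definition hpolicy := seq (S * A) -> S -> A -> R.
Definition is_hpolicy (pi : hpolicy) : Prop :=
  forall h s, (forall a, 0 <= pi h s a) /\ \sum_(a : A) pi h s a = 1.

Fixpoint Vn (pi : hpolicy) (k : nat) (h : seq (S * A)) (s : S) : \bar R :=
  match k with
  | 0 => 0%E
  | k'.+1 => (\sum_(a : A) (pi h s a)%:E *
                ((r s a)%:E + gamma%:E *
                   \int[P a s]_x Vn pi k' (rcons h (s, a)) x))%E
  end.

(* v^pi(s) = E_{pi,s}[sum_t gamma^t R_t] (limit of the nondecreasing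
   truncated sums). *)
Definition vpol (pi : hpolicy) (s : S) : \bar R :=
  ereal_sup (range (fun k => Vn pi k [::] s)).

Definition vstar (s : S) : \bar R :=
  ereal_sup [set vpol pi s | pi in is_hpolicy].

Definition det_policy (pi : S -> A) : hpolicy :=
  fun _ s a => (a == pi s)%:R.

Definition vdet (pi : S -> A) (s : S) : \bar R := vpol (det_policy pi) s.

(* q^pi(s,a): take action a first, then follow pi. *)
Definition first_then (a : A) (pi : S -> A) : hpolicy :=
  fun h s b => if h is [::] then (b == a)%:R else (b == pi s)%:R.

Definition qdet (pi : S -> A) (s : S) (a : A) : \bar R :=
  vpol (first_then a pi) s.

End MDP.

Section CAPI.
Context {R : realType} {T : Type} {n : nat}.
Local Notation A := 'I_n.+1.

Definition maxq (f : A -> R) : R := \big[Num.max/f ord0]_(j : A) f j.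

(* arg max_a f a, ties broken by the smallest index *)
Definition argmax_first (f : A -> R) : A :=
  odflt ord0 [pick i : A | (f i == maxq f) &&
                 [forall j : A, (f j == maxq f) ==> (i <= j)%N]].

Definition capi (qh : T -> A -> R) (pi : T -> A) (omega : R) (Sfix : set T)
    (s : T) : A :=
  if ~~ (s \in Sfix) && (qh s (pi s) + omega < maxq (qh s) - omega)
  then argmax_first (qh s) else pi s.
End CAPI.

(* Main.v *)
Require Import Defs.
From HB Require Import structures.
From mathcomp Require Import all_boot all_order all_algebra.
From mathcomp Require Import all_classical all_reals all_analysis.
From mathcomp Require Import measurable_realfun.
From mathcomp Require Import lra ring.
Import Order.TTheory GRing.Theory Num.Theory.
Local Open Scope classical_set_scope.
Local Open Scope ring_scope.
Section Argmax.
Context {R : realType} {n : nat}.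
Local Notation A := 'I_n.+1.

Lemma maxq_ge (f : A -> R) j : f j <= maxq f.
Proof. by rewrite /maxq (bigD1 j) //= le_max lexx. Qed.

Lemma maxq_ex (f : A -> R) : exists j, maxq f = f j.
Proof.
rewrite /maxq; apply: (big_ind (fun x => exists j, x = f j)).
- by exists ord0.
- move=> x y [i ->] [j ->]; case: (leP (f i) (f j)) => _.
  + by exists j. + by exists i.
- by move=> i _; exists i.
Qed.

Definition amP (f : A -> R) (i : A) :=
  (f i == maxq f) && [forall j : A, (f j == maxq f) ==> (i <= j)%N].

Lemma amP_ex (f : A -> R) : exists i, amP f i.
Proof.
have [j0 hj0] := maxq_ex f.
have hp : (f j0 == maxq f) by rewrite hj0.
case: (@arg_minnP A j0 (fun i => f i == maxq f) (fun i => nat_of_ord i) hp).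
move=> i fi imin; exists i; rewrite /amP fi /=.
by apply/forallP => j; apply/implyP => /imin.
Qed.

Lemma amP_uniq (f : A -> R) i j : amP f i -> amP f j -> i = j.
Proof.
move=> /andP[fi /forallP hi] /andP[fj /forallP hj].
apply: val_inj => /=; apply/eqP; rewrite eqn_leq.
by rewrite (implyP (hi j) fj) (implyP (hj i) fi).
Qed.

Lemma argmax_firstP (f : A -> R) : amP f (argmax_first f).
Proof.
rewrite /argmax_first; case: pickP => [i //|h].
by have [i hi] := amP_ex f; move: (h i); rewrite /amP in hi *; rewrite hi.
Qed.

Lemma argmax_eq (f : A -> R) a : (argmax_first f == a) = amP f a.
Proof.
apply/eqP/idP => [<-|h]; first exact: argmax_firstP.
exact: amP_uniq (argmax_firstP f) h.
Qed.

Lemma argmax_max (f : A -> R) : f (argmax_first f) = maxq f.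
Proof. by have /andP[/eqP -> _] := argmax_firstP f. Qed.

Lemma capi_step (g Q : A -> R) (p : A) (w : R) :
  (forall a, `|g a - Q a| <= w) ->
  let p' := if g p + w < maxq g - w then argmax_first g else p in
  Q p <= Q p' /\ forall a, Q a <= Q p' + 4 * w.
Proof.
move=> hg p'.
have h1 a : Q a <= g a + w by have := hg a; rewrite ler_norml; case/andP=> HH _; lra.
have h2 a : g a - w <= Q a by have := hg a; rewrite ler_norml; case/andP=> _ HH; lra.
have w0 : 0 <= w by have := hg p; apply: le_trans.
rewrite /p'; case: ifP => hc.
- have hm := argmax_max g.
  have hc2 : g p + w < maxq g - w by [].
  split.
    by have := h1 p; have := h2 (argmax_first g); lra.
  move=> a; have := h1 a; have := maxq_ge g a; have := h2 (argmax_first g).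
  lra.
- have hc' : maxq g - w <= g p + w by rewrite leNgt hc.
  split => // a; have := h1 a; have := maxq_ge g a; have := h2 p.
  lra.
Qed.
End Argmax.
Section Gen.
Local Open Scope ereal_scope.
Lemma le_int_gen (R : realType) d (T : measurableType d) (mu : {measure set T -> \bar R}) (f g : T -> \bar R) :
  (forall x, 0 <= f x) -> (forall x, f x <= g x) -> \int[mu]_x f x <= \int[mu]_x g x.
Proof.
move=> f0 fg.
have g0 : forall x, 0 <= g x by move=> x; exact: le_trans (f0 x) (fg x).
rewrite !ge0_integralTE//.
apply: ereal_sup_le => _ [h hf <-]; exists h => //= x; exact: le_trans (hf x) (fg x).
Qed.

Lemma small_pow (R : realType) (g e : R) : (0 <= g < 1)%R -> (0 < e)%R -> exists k, (g ^+ k < e)%R.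
Proof.
move=> /andP[g0 g1] e0.
have hz : (`|g| < 1)%R by rewrite ger0_norm.
have := (proj1 (cvgr0Pnorm_lt (GRing.exp g)) (cvg_expr hz)) e e0.
case=> N _ HN; exists N; have := HN N (leqnn N) => /=.
by rewrite ger0_norm // exprn_ge0.
Qed.

Lemma lim_arg (R : realType) (g c : R) (x y : \bar R) : (0 <= g < 1)%R -> (0 <= c)%R ->
  (forall k, x <= y + (g ^+ k * c)%:E) -> x <= y.
Proof.
move=> hg c0 H; apply/lee_addgt0Pr => e e0.
have c1 : (0 < 1 + c)%R by lra.
have [k hk] := @small_pow R g (e / (1 + c)) hg (divr_gt0 e0 c1).
apply: le_trans (H k) _; apply: leeD2l; rewrite lee_fin.
apply: le_trans (_ : (e / (1 + c) * c <= e)%R).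
  by apply: ler_wpM2r => //; apply: ltW.
rewrite mulrAC ler_pdivrMr; last lra.
by rewrite ler_pM2l //; lra.
Qed.

Lemma sum_pick (R : realType) n (c : 'I_n.+1) (X : 'I_n.+1 -> \bar R) :
  \sum_(b : 'I_n.+1) (((b == c)%:R)%:E * X b) = X c.
Proof.
rewrite (bigD1 c) //= eqxx mulr1n mul1e big1 ?adde0 // => b /negbTE ->.
by rewrite mulr0n mul0e.
Qed.

Lemma sum_convex_le (R : realType) n (mu : 'I_n.+1 -> R) (Y : 'I_n.+1 -> \bar R) (M : R) :
  (forall a, 0 <= mu a)%R -> (\sum_a mu a = 1)%R -> (forall a, Y a <= M%:E) ->
  \sum_a (mu a)%:E * Y a <= M%:E.
Proof.
move=> mu0 mu1 hY.
apply: le_trans (_ : \sum_a (mu a)%:E * M%:E <= _).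
  by apply: lee_sum => a _; apply: lee_wpmul2l; rewrite ?lee_fin.
under eq_bigr do rewrite -EFinM.
by rewrite sumEFin -mulr_suml mu1 mul1r.
Qed.
End Gen.
Arguments le_int_gen {R d T} mu {f g}.
Section MDPL.
Context {R : realType} {d : measure_display} {S : measurableType d} {n : nat}.
Local Notation A := 'I_n.+1.
Variables (P : A -> R.-pker S ~> S) (r : S -> A -> R) (gamma : R).
Hypothesis hg0 : (0 <= gamma)%R.
Hypothesis hg1 : (gamma < 1)%R.
Hypothesis hr : forall s a, (0 <= r s a <= 1)%R.
Hypothesis hrm : forall a, measurable_fun setT (fun s => r s a).
Local Open Scope ereal_scope.
Ltac glra := have := hg0; have := hg1; lra.

Definition CC : R := (1 - gamma)^-1.

Lemma CC_ge0 : (0 <= CC)%R.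
Proof. by rewrite /CC invr_ge0; glra. Qed.

Lemma CC_eq : (1 + gamma * CC = CC)%R.
Proof. rewrite /CC; field; glra. Qed.

Definition Ta (a : A) (u : S -> \bar R) (s : S) : \bar R :=
  (r s a)%:E + gamma%:E * \int[P a s]_x u x.

Lemma int_le_cst a s (u : S -> \bar R) (c : R) :
  (forall x, 0 <= u x) -> (forall x, u x <= c%:E) -> \int[P a s]_x u x <= c%:E.
Proof.
move=> u0 uc; have := le_int_gen (P a s) u0 uc => H. apply: le_trans H _.
by rewrite integral_cst // prob_kernel mule1.
Qed.

Lemma int_addc (a : A) (s : S) (u : S -> \bar R) (c : R) :
  measurable_fun setT u -> (forall x, 0 <= u x) -> (0 <= c)%R ->
  \int[P a s]_x (u x + c%:E) = \int[P a s]_x u x + c%:E.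
Proof.
move=> mu u0 c0; rewrite ge0_integralD //.
by rewrite integral_cst // prob_kernel mule1.
Qed.

Lemma Ta_ge0 a u s : (forall x, 0 <= u x) -> 0 <= Ta a u s.
Proof.
move=> u0; rewrite /Ta adde_ge0 // ?lee_fin ?(andP (hr s a)).1 //.
by rewrite mule_ge0 ?lee_fin // integral_ge0.
Qed.

Lemma Ta_le a u v s : (forall x, 0 <= u x) -> (forall x, u x <= v x) -> Ta a u s <= Ta a v s.
Proof.
move=> u0 uv; rewrite /Ta leeD2l // lee_wpmul2l ?lee_fin //.
exact: le_int_gen.
Qed.

Lemma Ta_addc (a : A) (u : S -> \bar R) (s : S) (c : R) : measurable_fun setT u -> (forall x, 0 <= u x) -> (0 <= c)%R ->
  Ta a (fun x => u x + c%:E) s = Ta a u s + (gamma * c)%:E.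
Proof.
move=> mu u0 c0; by rewrite /Ta int_addc // ge0_muleDr ?integral_ge0 ?lee_fin // addeA EFinM.
Qed.

Lemma Ta_leC a u s : (forall x, 0 <= u x) -> (forall x, u x <= CC%:E) -> Ta a u s <= CC%:E.
Proof.
move=> u0 uC; rewrite -CC_eq EFinD /Ta; apply: leeD.
  by rewrite lee_fin (andP (hr s a)).2.
by rewrite EFinM lee_wpmul2l ?lee_fin // int_le_cst.
Qed.

Lemma Vn_ge0 (pi : @hpolicy R d S n) (hpi : is_hpolicy pi) k h s : 0 <= Vn P r gamma pi k h s.
Proof.
elim: k h s => [//|k IH] h s /=.
apply: sume_ge0 => a _; apply: mule_ge0; first by rewrite lee_fin (hpi h s).1.
exact: Ta_ge0.
Qed.

Lemma Vn_leC (pi : @hpolicy R d S n) (hpi : is_hpolicy pi) k h s : Vn P r gamma pi k h s <= CC%:E.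
Proof.
elim: k h s => [|k IH] h s /=; first by rewrite lee_fin CC_ge0.
apply: sum_convex_le; [exact: (hpi h s).1 | exact: (hpi h s).2 |] => a.
by apply: Ta_leC => x; [exact: Vn_ge0 | exact: IH].
Qed.

Lemma det_hpolicy (pi : S -> A) : is_hpolicy (@det_policy R d S n pi).
Proof.
move=> h s; split => [a|]; first by rewrite /det_policy ler0n.
rewrite /det_policy (bigD1 (pi s)) //= eqxx big1 ?addr0 // => b /negbTE ->.
by [].
Qed.

Lemma Vn_det_indep (pi : S -> A) k h h' s :
  Vn P r gamma (det_policy pi) k h s = Vn P r gamma (det_policy pi) k h' s.
Proof.
elim: k h h' s => [//|k IH] h h' s /=.
apply: eq_bigr => a _; congr (_ * (_ + _ * _)).
by apply: eq_integral => x _; exact: IH.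
Qed.

Definition W (pi : S -> A) k s := Vn P r gamma (det_policy pi) k [::] s.

Lemma W_S pi k s : W pi k.+1 s = Ta (pi s) (W pi k) s.
Proof.
rewrite /W /= /det_policy sum_pick /Ta; congr (_ + _ * _).
by apply: eq_integral => x _; exact: Vn_det_indep.
Qed.

Lemma W_ge0 pi k s : 0 <= W pi k s.
Proof. exact/Vn_ge0/det_hpolicy. Qed.

Lemma W_leC pi k s : W pi k s <= CC%:E.
Proof. exact/Vn_leC/det_hpolicy. Qed.

Definition measpol (pi : S -> A) := forall b, measurable (pi @^-1` [set b]).

Lemma Ta_meas (b : A) (u : S -> \bar R) : measurable_fun setT u -> (forall x, 0 <= u x) ->
  measurable_fun setT (Ta b u).
Proof.
move=> mu u0; apply: emeasurable_funD.
  by apply/measurable_EFinP; exact: hrm.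
apply: measurable_funeM.
exact: (measurable_fun_integral_kernel (measurable_kernel (P b)) u0 mu).
Qed.

Lemma W_meas pi (hpi : measpol pi) k : measurable_fun setT (W pi k).
Proof.
elim: k => [|k IH].
  by rewrite (_ : W pi 0 = cst 0); [exact: measurable_cst | exact: funext].
rewrite (_ : W pi k.+1 = fun s => \sum_(b : A) ((b == pi s)%:R)%:E * Ta b (W pi k) s).
  apply: emeasurable_fun_sum => b; apply: emeasurable_funM; last first.
    by apply: Ta_meas => //; exact: W_ge0.
  apply/measurable_EFinP.
  rewrite (_ : (fun x => _) = \1_(pi @^-1` [set b])).
    exact: measurable_indic.
  apply: funext => s /=; rewrite indicE.
  by case: (eqVneq b (pi s)) => h; [rewrite mem_set | rewrite memNset] => //= /esym; apply/eqP.
by apply: funext => s; rewrite W_S sum_pick.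
Qed.


Local Notation V pi s := (vdet P r gamma pi s).

Lemma W0 pi s : W pi 0 s = 0. Proof. by []. Qed.

Lemma W_mono1 pi k s : W pi k s <= W pi k.+1 s.
Proof.
elim: k s => [|k IH] s; first exact: W_ge0.
rewrite [W pi k.+2 s]W_S [W pi k.+1 s]W_S; apply: Ta_le => x; [exact: W_ge0|exact: IH].
Qed.

Lemma W_mono pi k m s : W pi k s <= W pi (k + m) s.
Proof.
elim: m => [|m IH]; first by rewrite addn0.
by rewrite addnS; apply: le_trans IH (W_mono1 _ _ _).
Qed.

Lemma W_tail pi (hpi : measpol pi) k m s : W pi (k + m) s <= W pi k s + (gamma ^+ k * CC)%:E.
Proof.
elim: k s => [|k IH] s.
  by rewrite add0n W0 add0e expr0 mul1r; exact: W_leC.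
rewrite addSn !W_S.
apply: le_trans (Ta_le _ _ (fun x => W pi k x + (gamma ^+ k * CC)%:E) _ _ _) _.
- by move=> x; exact: W_ge0.
- by move=> x; exact: IH.
rewrite Ta_addc //; last by rewrite mulr_ge0 ?exprn_ge0 ?CC_ge0.
- by rewrite exprS mulrA.
- exact: W_meas.
- by move=> x; exact: W_ge0.
Qed.

Lemma W_le_V pi k s : W pi k s <= V pi s.
Proof. by apply: ereal_sup_ubound; exists k. Qed.

Lemma V_ge0 pi s : 0 <= V pi s.
Proof. exact: le_trans (W_ge0 pi 0 s) (W_le_V pi 0 s). Qed.

Lemma V_leC pi s : V pi s <= CC%:E.
Proof. by apply: ge_ereal_sup => _ [k _ <-]; exact: W_leC. Qed.

Lemma V_fin pi s : V pi s \is a fin_num.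
Proof.
by rewrite ge0_fin_numE ?V_ge0 //; apply: le_lt_trans (V_leC pi s) _; exact: ltey.
Qed.

Lemma V_le_W pi (hpi : measpol pi) k s : V pi s <= W pi k s + (gamma ^+ k * CC)%:E.
Proof.
apply: ge_ereal_sup => _ [m _ <-].
by apply: le_trans (W_mono pi m k s) _; rewrite addnC; exact: W_tail.
Qed.

Lemma Ta_V_approx pi (hpi : measpol pi) a s k :
  Ta a (fun x => V pi x) s <= Ta a (W pi k) s + (gamma ^+ k.+1 * CC)%:E.
Proof.
apply: le_trans (Ta_le _ _ (fun x => W pi k x + (gamma ^+ k * CC)%:E) _ _ _) _.
- by move=> x; exact: V_ge0.
- by move=> x; exact: V_le_W.
rewrite Ta_addc //; last by rewrite mulr_ge0 ?exprn_ge0 ?CC_ge0.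
- by rewrite exprS mulrA.
- exact: W_meas.
- by move=> x; exact: W_ge0.
Qed.

Lemma Vn_ft_ne a pi k h s : h != [::] ->
  Vn P r gamma (first_then a pi) k h s = Vn P r gamma (@det_policy R d S n pi) k h s.
Proof.
elim: k h s => [//|k IH] h s hne /=.
apply: eq_bigr => b _; congr (_ * (_ + _ * _)).
  by case: h hne.
apply: eq_integral => x _; apply: IH; by case: (h).
Qed.

Lemma q_S a pi k s : Vn P r gamma (first_then a pi) k.+1 [::] s = Ta a (W pi k) s.
Proof.
rewrite /= sum_pick /Ta; congr (_ + _ * _).
apply: eq_integral => x _; rewrite Vn_ft_ne //; exact: Vn_det_indep.
Qed.

Lemma Q_eq pi (hpi : measpol pi) s a : qdet P r gamma pi s a = Ta a (fun x => V pi x) s.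
Proof.
apply/eqP; rewrite eq_le; apply/andP; split.
  apply: ge_ereal_sup => _ [[|k] _ <-].
    by apply: Ta_ge0 => x; exact: V_ge0.
  rewrite q_S; apply: Ta_le => x; [exact: W_ge0|exact: W_le_V].
apply: (@lim_arg R gamma (gamma * CC)); first by apply/andP.
  by rewrite mulr_ge0 ?CC_ge0.
move=> k; apply: le_trans (Ta_V_approx pi hpi a s k) _.
rewrite exprSr -mulrA leeD2r //.
by apply: ereal_sup_ubound; exists k.+1 => //; rewrite q_S.
Qed.

Lemma improve pi pi' (hpi : measpol pi) (hpi' : measpol pi')
  (Himp : forall x, V pi x <= Ta (pi' x) (fun y => V pi y) x) s :
  Ta (pi' s) (fun y => V pi y) s <= V pi' s.
Proof.
have H k x : V pi x <= W pi' k x + (gamma ^+ k * CC)%:E.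
  elim: k x => [|k IH] x.
    by rewrite W0 add0e expr0 mul1r; exact: V_leC.
  apply: le_trans (Himp x) _.
  apply: le_trans (Ta_le _ _ (fun y => W pi' k y + (gamma ^+ k * CC)%:E) _ _ _) _.
  - by move=> y; exact: V_ge0.
  - by move=> y; exact: IH.
  rewrite Ta_addc //; last by rewrite mulr_ge0 ?exprn_ge0 ?CC_ge0.
  - by rewrite W_S exprS mulrA.
  - exact: W_meas.
  - by move=> y; exact: W_ge0.
apply: (@lim_arg R gamma (gamma * CC)); first by apply/andP.
  by rewrite mulr_ge0 ?CC_ge0.
move=> k.
apply: le_trans (Ta_le _ _ (fun y => W pi' k y + (gamma ^+ k * CC)%:E) _ _ _) _.
- by move=> y; exact: V_ge0.
- by move=> y; exact: H.
rewrite Ta_addc //; last by rewrite mulr_ge0 ?exprn_ge0 ?CC_ge0.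
- rewrite -W_S mulrA (mulrC gamma) -mulrA leeD2r //; exact: W_le_V.
- exact: W_meas.
- by move=> y; exact: W_ge0.
Qed.

Lemma Ta_Vc pi (hpi : measpol pi) a s (c : R) : (0 <= c)%R ->
  Ta a (fun y => V pi y + c%:E) s <= Ta a (fun y => V pi y) s + (gamma * c)%:E.
Proof.
move=> c0.
apply: (@lim_arg R gamma (gamma * CC)); first by apply/andP.
  by rewrite mulr_ge0 ?CC_ge0.
move=> k.
apply: le_trans (Ta_le _ _ (fun y => W pi k y + (gamma ^+ k * CC + c)%:E) _ _ _) _.
- by move=> y; rewrite adde_ge0 ?V_ge0 ?lee_fin.
- move=> y; rewrite EFinD addeA leeD2r //; exact: V_le_W.
rewrite Ta_addc //; last by rewrite addr_ge0 ?mulr_ge0 ?exprn_ge0 ?CC_ge0.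
- rewrite -[X in _ <= X]addeA -(EFinD (gamma * c)).
  have -> : (gamma * (gamma ^+ k * CC + c) = gamma * c + gamma ^+ k * (gamma * CC))%R by ring.
  rewrite leeD2r //; apply: Ta_le => y; [exact: W_ge0 | exact: W_le_V].
- exact: W_meas.
- by move=> y; exact: W_ge0.
Qed.

Lemma main_step pi pi' (hpi : measpol pi) (hpi' : measpol pi') (e w : R)
  (e0 : (0 <= e)%R) (w0 : (0 <= w)%R)
  (Hq : forall s a, Ta a (fun y => V pi y) s <= Ta (pi' s) (fun y => V pi y) s + (4 * w)%:E)
  (Himp : forall s, Ta (pi' s) (fun y => V pi y) s <= V pi' s)
  (B : forall mu : @hpolicy R d S n, is_hpolicy mu ->
         forall k h x, Vn P r gamma mu k h x <= V pi x + e%:E) :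
  forall mu : @hpolicy R d S n, is_hpolicy mu ->
    forall k h x, Vn P r gamma mu k h x <= V pi' x + (gamma * e + 4 * w)%:E.
Proof.
move=> mu hmu [|k] h x.
  by rewrite /= adde_ge0 ?V_ge0 // lee_fin addr_ge0 ?mulr_ge0.
rewrite /= -(fineK (V_fin pi' x)) -EFinD.
apply: sum_convex_le; [exact: (hmu h x).1 | exact: (hmu h x).2 |] => a.
apply: le_trans (Ta_le a (fun y => Vn P r gamma mu k (rcons h (x, a)) y)
   (fun y => V pi y + e%:E) x _ _) _.
- by move=> y; exact: Vn_ge0.
- by move=> y; exact: B.
apply: le_trans (Ta_Vc pi hpi a x e e0) _.
apply: le_trans (leeD2r _ (Hq x a)) _.
apply: le_trans (leeD2r _ (leeD2r _ (Himp x))) _.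
rewrite -{1}(fineK (V_fin pi' x)) -!EFinD lee_fin; lra.
Qed.

Lemma V_le_Ta pi s : V pi s <= Ta (pi s) (fun y => V pi y) s.
Proof.
apply: ge_ereal_sup => _ [[|k] _ <-].
  by apply: Ta_ge0 => y; exact: V_ge0.
have -> : Vn P r gamma (@det_policy R d S n pi) k.+1 [::] s = Ta (pi s) (W pi k) s := W_S pi k s.
apply: Ta_le => y; [exact: W_ge0|exact: W_le_V].
Qed.

End MDPL.

Section CapiMeas.
Context {R : realType} {d : measure_display} {S : measurableType d} {n : nat}.
Local Notation A := 'I_n.+1.

Lemma meas_bigor (l : seq A) (f : A -> S -> bool) :
  (forall b, measurable_fun setT (f b)) ->
  measurable_fun setT (fun s => \big[orb/false]_(b <- l) f b s).
Proof.
move=> hf; elim: l => [|b l IH].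
  by under eq_fun do rewrite big_nil; exact: measurable_cst.
by under eq_fun do rewrite big_cons; exact: measurable_or.
Qed.

Lemma meas_bigand (l : seq A) (f : A -> S -> bool) :
  (forall b, measurable_fun setT (f b)) ->
  measurable_fun setT (fun s => \big[andb/true]_(b <- l) f b s).
Proof.
move=> hf; elim: l => [|b l IH].
  by under eq_fun do rewrite big_nil; exact: measurable_cst.
by under eq_fun do rewrite big_cons; exact: measurable_and.
Qed.

Lemma meas_bigmax (F : S -> A -> R) (hF : forall a, measurable_fun setT (fun s => F s a))
  (l : seq A) (x0 : S -> R) : measurable_fun setT x0 ->
  measurable_fun setT (fun s => \big[Num.max/x0 s]_(j <- l) F s j).
Proof.
move=> m0; elim: l => [|b l IH].
  by under eq_fun do rewrite big_nil.
under eq_fun do rewrite big_cons.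
exact: measurable_maxr.
Qed.

Lemma meas_maxq (F : S -> A -> R) (hF : forall a, measurable_fun setT (fun s => F s a)) :
  measurable_fun setT (fun s => maxq (F s)).
Proof. exact: (meas_bigmax F hF (index_enum A) (fun s => F s ord0) (hF ord0)). Qed.

Lemma bool_set_meas (f : S -> bool) : measurable_fun setT f -> measurable [set s | f s].
Proof.
move=> mf; have := mf measurableT [set true] I; rewrite setTI.
by congr measurable; apply/seteqP; split => s /=.
Qed.

Lemma capi_meas (F : S -> A -> R) (hF : forall a, measurable_fun setT (fun s => F s a))
  (pi : S -> A) (hpi : forall b, measurable (pi @^-1` [set b])) (w : R) :
  forall a, measurable ((capi F pi w set0) @^-1` [set a]).
Proof.
move=> a.
have mpi b : measurable_fun setT (fun s => pi s == b).
  apply: (measurable_fun_bool true); rewrite setTI.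
  rewrite (_ : _ @^-1` _ = pi @^-1` [set b]); first exact: hpi.
  by apply/seteqP; split => s /= /eqP.
have mM := meas_maxq F hF.
set M := fun s => maxq (F s) in mM.
have mcond : measurable_fun setT (fun s => F s (pi s) + w < M s - w).
  rewrite (_ : (fun s => _) = (fun s => \big[orb/false]_(b <- index_enum A)
                 ((pi s == b) && (F s b + w < M s - w)))).
    apply: meas_bigor => b; apply: measurable_and => //.
    apply: measurable_fun_ltr.
      by apply: measurable_funD => //; exact: measurable_cst.
    by apply: measurable_funB => //; exact: measurable_cst.
  apply: funext => s; rewrite big_has; apply/idP/hasP.
    by move=> h; exists (pi s); rewrite ?mem_index_enum ?eqxx.
  by move=> [b _ /andP[/eqP -> ->]].
have meq j : measurable_fun setT (fun s => F s j == M s).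
  exact: measurable_fun_eqr.
have mam : measurable_fun setT (fun s => amP (F s) a).
  rewrite (_ : (fun s => _) = (fun s => (F s a == M s) && \big[andb/true]_(j <- index_enum A)
                 (~~ (F s j == M s) || (a <= j)%N))).
    apply: measurable_and => //; apply: meas_bigand => j; apply: measurable_or.
      exact: measurable_neg.
    exact: measurable_cst.
  apply: funext => s; rewrite /amP big_all; congr andb.
  apply/forallP/allP => H j.
    by move=> _; rewrite -implybE; exact: H.
  by rewrite implybE; apply: H; rewrite mem_index_enum.
have mb : measurable_fun setT (fun s => capi F pi w set0 s == a).
  rewrite (_ : (fun s => _) = (fun s => ((F s (pi s) + w < M s - w) && amP (F s) a) ||
                 (~~ (F s (pi s) + w < M s - w) && (pi s == a)))).
    apply: measurable_or; apply: measurable_and => //; exact: measurable_neg.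
  apply: funext => s; rewrite /capi in_set0 /=.
  by case: ifP => _; rewrite ?argmax_eq //= orbF.
have := bool_set_meas _ mb.
by congr measurable; apply/seteqP; split => s /= /eqP.
Qed.
End CapiMeas.

Theorem theorem3p5 (R : realType) (d : measure_display) (S : measurableType d)
  (n : nat) (P : 'I_n.+1 -> R.-pker S ~> S) (r : S -> 'I_n.+1 -> R)
  (gamma : R)
  (hgamma : 0 < gamma < 1)
  (hr : forall s a, 0 <= r s a <= 1)
  (hrm : forall a, measurable_fun setT (fun s => r s a))
  (omega : R) (homega : 0 < omega < 1)
  (I : nat) (hI : (I : int) = Num.ceil (ln omega / ln gamma))
  (pi : nat -> S -> 'I_n.+1) (qh : nat -> S -> 'I_n.+1 -> R)
  (hpi0 : forall a, measurable (pi 0%N @^-1` [set a]))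
  (hqm : forall i a, measurable_fun setT (fun s => qh i s a))
  (hq : forall i, (1 <= i <= I)%N -> forall s a,
      (`| (qh i s a)%:E - qdet P r gamma (pi i.-1) s a | <= omega%:E)%E)
  (hupd : forall i, (1 <= i <= I)%N ->
      pi i = capi (qh i) (pi i.-1) omega set0) :
  forall s, (vstar P r gamma s - vdet P r gamma (pi I) s
             <= (5 * omega / (1 - gamma))%:E)%E.
Proof.
have hg0 : 0 <= gamma by case/andP: hgamma => /ltW.
have hg1 : gamma < 1 by case/andP: hgamma.
have hw0 : 0 <= omega by case/andP: homega => /ltW.
have C0 : 0 <= CC gamma := CC_ge0 gamma hg0 hg1.
have Ceq : 1 + gamma * CC gamma = CC gamma := CC_eq gamma hg0 hg1.
have mpi : forall i, (i <= I)%N -> measpol (pi i).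
  elim=> [_|i IH hi]; first exact: hpi0.
  rewrite (hupd i.+1) /=; last by rewrite hi.
  by move=> a; apply: capi_meas => //; exact: IH (ltnW hi).
pose E i := gamma ^+ i * CC gamma + 4 * omega * CC gamma.
have E0 i : 0 <= E i by rewrite /E addr_ge0 ?mulr_ge0 ?exprn_ge0.
have key : forall i, (i <= I)%N -> forall mu : @hpolicy R d S n, is_hpolicy mu ->
    forall k h x, (Vn P r gamma mu k h x <= vdet P r gamma (pi i) x + (E i)%:E)%E.
  elim=> [_|i IH hi] mu hmu k h x.
    apply: le_trans (Vn_leC P r gamma hg0 hg1 hr mu hmu k h x) _.
    rewrite -[X in (X <= _)%E]add0e; apply: leeD; first exact: V_ge0.
    by rewrite lee_fin /E expr0 mul1r lerDl mulr_ge0 ?mulr_ge0.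
  have hi' : (i <= I)%N := ltnW hi.
  have hupdi : pi i.+1 = capi (qh i.+1) (pi i) omega set0 by rewrite (hupd i.+1) //= hi.
  have Hcap : forall s,
      (forall a, (Ta P r gamma a (fun y => vdet P r gamma (pi i) y) s <=
         Ta P r gamma (pi i.+1 s) (fun y => vdet P r gamma (pi i) y) s + (4 * omega)%:E)%E) /\
      (Ta P r gamma (pi i s) (fun y => vdet P r gamma (pi i) y) s <=
         Ta P r gamma (pi i.+1 s) (fun y => vdet P r gamma (pi i) y) s)%E.
    move=> s.
    pose Q a := fine (Ta P r gamma a (fun y => vdet P r gamma (pi i) y) s).
    have QE a : Ta P r gamma a (fun y => vdet P r gamma (pi i) y) s = (Q a)%:E.
      rewrite /Q fineK // ge0_fin_numE; last by apply: Ta_ge0 => // y; exact: V_ge0.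
      apply: (@le_lt_trans _ _ (CC gamma)%:E); last exact: ltey.
      apply: Ta_leC => // y; [exact: V_ge0 | exact: V_leC].
    have hQ a : `|qh i.+1 s a - Q a| <= omega.
      have := hq i.+1 (hi : (1 <= i.+1 <= I)%N) s a.
      by rewrite /= (Q_eq P r gamma hg0 hg1 hr hrm (pi i) (mpi i hi') s a) QE -EFinB abse_EFin lee_fin.
    have ep : pi i.+1 s = (if qh i.+1 s (pi i s) + omega < maxq (qh i.+1 s) - omega
                then argmax_first (qh i.+1 s) else pi i s).
      by rewrite hupdi /capi in_set0.
    have := capi_step (qh i.+1 s) Q (pi i s) omega hQ.
    rewrite /= -ep => -[h1 h2].
    split; last by rewrite !QE lee_fin.
    by move=> a; rewrite !QE -EFinD lee_fin.
  have Himp : forall s, (Ta P r gamma (pi i.+1 s) (fun y => vdet P r gamma (pi i) y) s <=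
       vdet P r gamma (pi i.+1) s)%E.
    apply: (improve P r gamma hg0 hg1 hr hrm (pi i) (pi i.+1) (mpi i hi') (mpi i.+1 hi)) => y.
    exact: le_trans (V_le_Ta P r gamma hg0 hr (pi i) y) (Hcap y).2.
  have := main_step P r gamma hg0 hg1 hr hrm (pi i) (pi i.+1) (mpi i hi') (mpi i.+1 hi)
    (E i) omega (E0 i) hw0 (fun s a => (Hcap s).1 a) Himp (IH hi') mu hmu k h x.
  suff -> : gamma * E i + 4 * omega = E i.+1 by [].
  apply/eqP; rewrite -subr_eq0 /E.
  have -> : gamma * (gamma ^+ i * CC gamma + 4 * omega * CC gamma) + 4 * omega -
     (gamma ^+ i.+1 * CC gamma + 4 * omega * CC gamma) =
     4 * omega * (1 + gamma * CC gamma - CC gamma) by rewrite exprS; ring.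
  by rewrite Ceq subrr mulr0.
have gI : gamma ^+ I <= omega.
  have lg : ln gamma < 0 := ln_lt0 hgamma.
  have hceil := ceil_ge (ln omega / ln gamma); rewrite -hI in hceil.
  have hc2 : ln omega / ln gamma <= I%:R by [].
  have e1 : ln omega / ln gamma * ln gamma = ln omega by rewrite divfK // lt_eqF.
  have : I%:R * ln gamma <= ln omega.
    have a1 : 0 <= I%:R - ln omega / ln gamma by rewrite subr_ge0.
    have a2 : 0 <= - ln gamma by rewrite oppr_ge0 ltW.
    have := mulr_ge0 a1 a2; nra.
  have gp : 0 < gamma by case/andP: hgamma.
  have wp : 0 < omega by case/andP: homega.
  rewrite mulr_natl -lnXn // ler_ln ?posrE ?exprn_gt0 //.
move=> s.
rewrite leeBlDr; last exact: V_fin.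
apply: le_trans (_ : (vstar P r gamma s <= (E I)%:E + vdet P r gamma (pi I) s)%E) _.
  apply: ge_ereal_sup => _ [mu hmu <-]; apply: ge_ereal_sup => _ [k _ <-].
  by rewrite addeC; exact: key I (leqnn I) mu hmu k [::] s.
rewrite leeD2r // lee_fin /E /CC.
have b1 : 0 <= omega - gamma ^+ I by rewrite subr_ge0.
have := mulr_ge0 b1 C0; rewrite /CC; nra.
Qed.
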